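(* Let $N$ be the generalised Cartan matrix of type $A_r$ ($r\ge1$) or $A^{(1)}_{r-1}$ ($r\ge 2$), and let $\mathfrak h$, $\alpha_i$, $Z$, $\mathcal A$, $v_1,\dots,v_r$ be as in the context, with $F:\mathfrak h\to\mathrm{Der}(\mathcal A)$ a Lie algebra homomorphism such that $\ker F=Z$ and $F(H)(v_i)=\alpha_i(H)v_i$. Then Problem 1 has a solution, and the set of solutions (tuples $(\delta_1,\dots,\delta_r,\delta_{-1},\dots,\delta_{-r})\in(\mathrm{Im}\,F)^{2r}$ solving Problem 1) is in one-to-one correspondence with the set of solution matrices of $N$.
   Context: The generalised Cartan matrix of type $A_r$ ($r\ge1$) is the $r\times r$ matrix $N=[n(i,j)]$ with $2$ on the diagonal, $-1$ in positions $(i,i\pm1)$ and $0$ elsewhere; that of type $A^{(1)}_1$ is $\begin{pmatrix}2&-2\\-2&2\end{pmatrix}$; that of type $A^{(1)}_{r-1}$ ($r\ge3$) has $2$ on the diagonal, $-1$ in positions $(i,i\pm1)$ and $(1,r),(r,1)$, $0$ elsewhere. A solution matrix of $N$ is an $r\times r$ complex matrix $A=[A_{ij}]$ with all $A_{ii}\ne0$ such that $A'=[A_{ij}/A_{jj}]$ satisfies: $A'_{ij}\in\{0,-1\}$ for $i\ne j$; $A'_{ij}+A'_{ji}=n(j,i)$; and if $A'_{ij}=-1$ then the $i$-th row and $j$-th column of $A'$ have no other entries $-1$. Let $s$ be the corank of $N$, $\mathfrak h$ the complex vector space with basis $H_1,\dots,H_{r+s}$, $\alpha_1,\dots,\alpha_r\in\mathfrak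 h^*$ linearly independent with $\alpha_j(H_i)=n(i,j)$ ($1\le i,j\le r$), and $Z=\bigcap_i\ker\alpha_i$. $\mathcal A$ is a complex commutative algebra, $\mathrm{Der}(\mathcal A)$ its Lie algebra of derivations; for $a\in\mathcal A$, $D\in\mathrm{Der}(\mathcal A)$, $aD$ is $b\mapsto aD(b)$; $v_1,\dots,v_r\in\mathcal A$ are invertible. A solution of Problem 1 is a tuple $\delta_1,\dots,\delta_r,\delta_{-1},\dots,\delta_{-r}\in\mathrm{Im}\,F$ such that, with $\mathbf H_a=F(H_a)$, $\mathbf X_i=v_i\delta_i$, $\mathbf X_{-i}=v_i^{-1}\delta_{-i}$: (a) $[\mathbf H_a,\mathbf H_b]=0$; (b) $[\mathbf X_i,\mathbf X_{-i}]=\mathbf H_i$, $[\mathbf X_i,\mathbf X_{-j}]=0$ ($i\ne j$); (c) $[\mathbf H_a,\mathbf X_{\pm j}]=\pm\alpha_j(H_a)\mathbf X_{\pm j}$; (d) $\mathrm{ad}(\mathbf X_i)^{1-n(i,j)}(\mathbf X_j)=0$ ($i\ne j$); (e) $\mathrm{ad}(\mathbf X_{-i})^{1-n(i,j)}(\mathbf X_{-j})=0$ ($i\ne j$). *)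

(* Defs.v *)
(* Complex numbers are modelled as R[i] (complex.v of
   mathcomp-real-closed) over an arbitrary model R of the reals (realType). *)
From HB Require Import structures.
From mathcomp Require Import all_boot all_order all_algebra.
From mathcomp Require Import reals.
From mathcomp Require Import complex.
Set Implicit Arguments. Unset Strict Implicit. Unset Printing Implicit Defensive.
Import Order.TTheory GRing.Theory Num.Theory.
Local Open Scope ring_scope.

Inductive cartan_type := TypeA | TypeA1 (* A^{(1)}_{r-1} *).

(* n(i,j) for indices i j : 'I_r (0-based; the paper's index i+1). *)
Definition cartan_entry (t : cartan_type) (r : nat) (i j : 'I_r) : int :=
  if i == j then 2
  else match t with
       | TypeA => if (i.+1 == j :> nat) || (j.+1 == i :> nat) then -1 else 0
       | TypeA1 =>
           if r == 2%N then -2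
           else if (i.+1 == j :> nat) || (j.+1 == i :> nat)
                   || ((i == 0%N :> nat) && (j == r.-1 :> nat))
                   || ((j == 0%N :> nat) && (i == r.-1 :> nat))
                then -1 else 0
       end.

Definition cartanN (t : cartan_type) (r : nat) : 'M[int]_r :=
  \matrix_(i, j) cartan_entry t i j.

Definition admissible_rank (t : cartan_type) (r : nat) : bool :=
  match t with TypeA => (1 <= r)%N | TypeA1 => (2 <= r)%N end.

Definition cartan_corank (t : cartan_type) : nat :=
  match t with TypeA => 0%N | TypeA1 => 1%N end.

Definition solution_matrix (K : fieldType) (r : nat) (N : 'M[int]_r)
    (A : 'M[K]_r) : Prop :=
  let A' := \matrix_(i, j) (A i j / A j j) in
  (forall i, A i i != 0) /\
  (forall i j, i != j -> A' i j = 0 \/ A' i j = -1) /\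
  (forall i j, i != j -> A' i j + A' j i = (N j i)%:~R) /\
  (forall i j, i != j -> A' i j = -1 ->
     (forall k, k != j -> A' i k != -1) /\ (forall k, k != i -> A' k j != -1)).

Definition is_derivation (K : fieldType) (A : comAlgType K) (D : A -> A) : Prop :=
  (forall (a : K) (x y : A), D (a *: x + y) = a *: D x + D y) /\
  (forall x y : A, D (x * y) = D x * y + x * D y).

Definition lieb (T : zmodType) (D E : T -> T) : T -> T :=
  fun x => D (E x) - E (D x).

Definition lmulD (K : fieldType) (A : comAlgType K) (a : A) (D : A -> A) : A -> A :=
  fun b => a * D b.

(* Standing hypotheses of the corollary.  h = C^(r+s) with basis
   H_a = delta_mx 0 a (a : 'I_(r+s)); the functional alpha_j is encoded by
   the column j of al : alpha_j(h) = (h *m al) 0 j.  H_i for i <= r is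
   H_(lshift s i). *)
Section Setting.
Variables (K : fieldType) (t : cartan_type) (r : nat).
Local Notation s := (cartan_corank t).
Local Notation N := (cartanN t r).
Variables (al : 'M[K]_(r + s, r)) (A : comUnitAlgType K)
  (F : 'rV[K]_(r + s) -> A -> A) (v : 'I_r -> A).

Definition alpha (j : 'I_r) (h : 'rV[K]_(r + s)) : K := (h *m al) 0 j.

Definition Hbasis (a : 'I_(r + s)) : 'rV[K]_(r + s) := delta_mx 0 a.

Definition standing_hyps : Prop :=
  row_free al^T /\
  (forall i j : 'I_r, al (lshift s i) j = (N i j)%:~R) /\
  (forall (c : K) h1 h2 x, F (c *: h1 + h2) x = c *: F h1 x + F h2 x) /\
  (forall h, is_derivation (F h)) /\
  (* F is a Lie algebra homomorphism (h is abelian) *)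
  (forall h1 h2 x, lieb (F h1) (F h2) x = 0) /\
  (* ker F = Z = intersection of the ker alpha_i *)
  (forall h, (forall x, F h x = 0) <-> h *m al = 0) /\
  (forall i, v i \is a GRing.unit) /\
  (forall h i, F h (v i) = alpha i h *: v i).

(* Problem 1, for a tuple (dp_1..dp_r, dm_1..dm_r) = (delta_1.., delta_-1..). *)
Definition problem1 (dp dm : 'I_r -> A -> A) : Prop :=
  let HH := fun a : 'I_(r + s) => F (Hbasis a) in
  let Xp := fun i => lmulD (v i) (dp i) in
  let Xm := fun i => lmulD (v i)^-1 (dm i) in
  (forall i, exists h, dp i = F h) /\
  (forall i, exists h, dm i = F h) /\
  (forall a b x, lieb (HH a) (HH b) x = 0) /\
  (forall i x, lieb (Xp i) (Xm i) x = HH (lshift s i) x) /\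
  (forall i j x, i != j -> lieb (Xp i) (Xm j) x = 0) /\
  (forall a j x, lieb (HH a) (Xp j) x = al a j *: Xp j x) /\
  (forall a j x, lieb (HH a) (Xm j) x = - al a j *: Xm j x) /\
  (forall i j x, i != j ->
     iter `|1 - N i j|%N (lieb (Xp i)) (Xp j) x = 0) /\
  (forall i j x, i != j ->
     iter `|1 - N i j|%N (lieb (Xm i)) (Xm j) x = 0).

End Setting.

(* Main.v *)
Require Import Defs.
From HB Require Import structures.
From mathcomp Require Import all_boot all_order all_algebra.
From mathcomp Require Import reals complex.
From mathcomp Require Import ring zify.
From Stdlib Require Import FunctionalExtensionality ProofIrrelevance ClassicalEpsilon.
Import Order.TTheory GRing.Theory Num.Theory.
Local Open Scope ring_scope.
Set Implicit Arguments. Unset Strict Implicit.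


Definition sc (K : fieldType) (A : comUnitAlgType K) (a : K) : A := a%:A.
Arguments sc {K} A a.
Lemma scE (K : fieldType) (A : comUnitAlgType K) (a : K) (x : A) : a *: x = sc A a * x.
Proof. by rewrite /sc mulr_algl. Qed.
Lemma scM (K : fieldType) (A : comUnitAlgType K) (a b : K) : sc A (a * b) = sc A a * sc A b.
Proof. by rewrite /sc -scalerAl mul1r scalerA. Qed.
Lemma scD (K : fieldType) (A : comUnitAlgType K) (a b : K) : sc A (a + b) = sc A a + sc A b.
Proof. by rewrite /sc scalerDl. Qed.
Lemma scN (K : fieldType) (A : comUnitAlgType K) (a : K) : sc A (- a) = - sc A a.
Proof. by rewrite /sc scaleNr. Qed.
Lemma sc1 (K : fieldType) (A : comUnitAlgType K) : sc A 1 = 1.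
Proof. by rewrite /sc scale1r. Qed.
Lemma sc0 (K : fieldType) (A : comUnitAlgType K) : sc A 0 = 0.
Proof. by rewrite /sc scale0r. Qed.
Lemma scn (K : fieldType) (A : comUnitAlgType K) (m : nat) : sc A m%:R = m%:R.
Proof. by rewrite /sc scaler_nat. Qed.

Definition Dgood (K : fieldType) (A : comUnitAlgType K) r (D : 'rV[K]_r -> A -> A) :=
 (forall a x y b, D (a *: x + y) b = a *: D x b + D y b) /\
 (forall c x y, D c (x*y) = D c x * y + x * D c y) /\
 (forall c1 c2 b, D c1 (D c2 b) = D c2 (D c1 b)).

Definition wt (K : fieldType) (A : comUnitAlgType K) r (D : 'rV[K]_r -> A -> A)
  (mu : 'rV[K]_r -> K) (w : A) := forall c, D c w = mu c *: w.

Lemma xx0 (V : zmodType) (x : V) : x = x + x -> x = 0.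
Proof. by move=> H; apply: (@addrI _ x); rewrite addr0 -H. Qed.

Lemma D0 K A r D (HD : @Dgood K A r D) b : D 0 b = 0.
Proof.
case: HD => Hl _. have := Hl 1 0 0 b. rewrite !scale1r addr0; exact: xx0.
Qed.

Lemma DD K A r D (HD : @Dgood K A r D) x y b : D (x + y) b = D x b + D y b.
Proof. by case: (HD) => Hl _; have := Hl 1 x y b; rewrite !scale1r. Qed.

Lemma DZ K A r D (HD : @Dgood K A r D) a x b : D (a *: x) b = a *: D x b.
Proof. by case: (HD) => Hl _; rewrite -(addr0 (a *: x)) Hl (D0 HD) addr0. Qed.

Lemma DN K A r D (HD : @Dgood K A r D) x b : D (- x) b = - D x b.
Proof. by rewrite -scaleN1r (DZ HD) scaleN1r. Qed.

Lemma DB K A r D (HD : @Dgood K A r D) x y b : D (x - y) b = D x b - D y b.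
Proof. by rewrite (DD HD) (DN HD). Qed.

Lemma Dunit1 K A r D (HD : @Dgood K A r D) c : D c 1 = 0.
Proof.
case: HD => _ [Hd _]. have := Hd c 1 1. rewrite !mulr1 mul1r; exact: xx0.
Qed.

Lemma wt1 K A r D (HD : @Dgood K A r D) : wt D (fun _ => 0) 1.
Proof. by move=> c; rewrite scale0r (Dunit1 HD). Qed.

Lemma wt_mul K A r D (HD : @Dgood K A r D) mu nu u w :
  wt D mu u -> wt D nu w -> wt D (fun c => mu c + nu c) (u * w).
Proof.
move=> Hu Hw c; case: HD => _ [Hd _].
by rewrite Hd Hu Hw !scE scD; ring.
Qed.

Lemma wt_exp K A r D (HD : @Dgood K A r D) mu u m :
  wt D mu u -> wt D (fun c => m%:R * mu c) (u ^+ m).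
Proof.
move=> Hu; elim: m => [|m IH] c.
  by rewrite expr0 mul0r scale0r (Dunit1 HD).
rewrite exprS (wt_mul HD Hu IH) mulrSr mulrDl mul1r addrC.
done.
Qed.

Lemma wt_inv K A r D (HD : @Dgood K A r D) mu u :
  u \is a GRing.unit -> wt D mu u -> wt D (fun c => - mu c) u^-1.
Proof.
move=> Uu Hu c; case: (HD) => _ [Hd _].
have := Hd c u u^-1. rewrite (mulrV Uu) (Dunit1 HD) Hu => H.
have H2 : u * D c u^-1 = - (mu c *: u * u^-1).
  by apply/eqP; rewrite -addr_eq0 addrC -H.
rewrite -(mulKr Uu (D c u^-1)) H2 !scE -mulrA (mulrV Uu) mulr1 scN; ring.
Qed.

Lemma brk K A r D (HD : @Dgood K A r D) mu nu u w c1 c2 :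
  wt D mu u -> wt D nu w ->
  lieb (lmulD u (D c1)) (lmulD w (D c2)) =
  lmulD (u * w) (D (nu c1 *: c2 - mu c2 *: c1)).
Proof.
move=> Hu Hw; apply: functional_extensionality => x.
case: (HD) => _ [Hd Hc].
rewrite /lieb /lmulD !Hd Hu Hw (DB HD) !(DZ HD) (Hc c2 c1) !scE.
ring.
Qed.

Definition colv (K : fieldType) r (P : 'M[K]_r) (i : 'I_r) : 'rV[K]_r := \row_k P k i.

Fixpoint gseq (K : fieldType) r (eps : K) (P : 'M[K]_r) (i j : 'I_r) (m : nat) : 'rV[K]_r :=
  match m with
  | 0 => colv P j
  | m'.+1 => (m'%:R * (eps * P i i) + eps * P j i) *: gseq eps P i j m'
             - (eps * gseq eps P i j m' 0 i) *: colv P i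
  end.

Lemma iter_form K A r D (HD : @Dgood K A r D) (W : 'I_r -> A) eps P i j m :
  (forall k, wt D (fun c => eps * c 0 k) (W k)) ->
  iter m (lieb (lmulD (W i) (D (colv P i)))) (lmulD (W j) (D (colv P j)))
  = lmulD (W i ^+ m * W j) (D (gseq eps P i j m)).
Proof.
move=> HW; elim: m => [|m IH]; first by rewrite /= expr0 mul1r.
rewrite /= IH.
rewrite (brk HD _ _ (HW i) (wt_mul HD (wt_exp HD m (HW i)) (HW j))).
by rewrite exprS mulrA /colv !mxE.
Qed.

Lemma lmulD0 K A r D (HD : @Dgood K A r D) (u : A) : lmulD u (D 0) = fun _ => 0.
Proof. by apply: functional_extensionality => x; rewrite /lmulD (D0 HD) mulr0. Qed.

Lemma serre K A r D (HD : @Dgood K A r D) (W : 'I_r -> A) eps (P : 'M[K]_r) i j n :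
  (forall k, wt D (fun c => eps * c 0 k) (W k)) ->
  ((n = 1%N /\ P i j = 0 /\ P j i = 0) \/ (n = 2%N /\ P i j = - P j j /\ P j i = 0) \/
   (n = 2%N /\ P i j = 0 /\ P j i = - P i i) \/ (n = 3%N /\ P i j = - P j j /\ P j i = - P i i)) ->
  iter n (lieb (lmulD (W i) (D (colv P i)))) (lmulD (W j) (D (colv P j))) = fun _ => 0.
Proof.
move=> HW Hc; rewrite (iter_form HD _ _ _ _ HW).
suff -> : gseq eps P i j n = 0 by apply: lmulD0.
apply/rowP => k; rewrite [RHS]mxE.
case: Hc => [[-> [H1 H2]]|[[-> [H1 H2]]|[[-> [H1 H2]]|[-> [H1 H2]]]]];
  rewrite /= /colv !mxE ?H1 ?H2; ring.
Qed.


Definition qv (K : fieldType) r (M : 'M[K]_r) (i : 'I_r) : 'rV[K]_r :=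
  \row_k (- M i k / (M i i * M k k)).
Definition Qm (K : fieldType) r (M : 'M[K]_r) : 'M[K]_r := \matrix_(k, i) qv M i 0 k.

Lemma lin_from (K : comPzRingType) (a b x y k : K) : a - b = k * (x - y) -> x = y -> a = b.
Proof. by move=> e h; apply/eqP; rewrite -subr_eq0 e h subrr mulr0. Qed.

Lemma xnegx (K : numFieldType) (x : K) : x = - x -> x = 0.
Proof. by move/eqP; rewrite -addr_eq0 -mulr2n mulrn_eq0 /= => /eqP. Qed.

Lemma one_neqN1 (K : numFieldType) : (1 : K) != -1.
Proof. by apply/eqP => /xnegx/eqP; rewrite oner_eq0. Qed.

Lemma ratio0 (K : fieldType) (x y : K) : y != 0 -> x / y = 0 -> x = 0.
Proof. by move=> hy h; rewrite -(divfK hy x) h mul0r. Qed.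
Lemma ratioN1 (K : fieldType) (x y : K) : y != 0 -> x / y = -1 -> x = - y.
Proof. by move=> hy h; rewrite -(divfK hy x) h mulN1r. Qed.

Lemma alg_complete (K : numFieldType) r (Nm : 'M[int]_r) (P Q : 'M[K]_r) :
 (forall i, Nm i i = 2) -> (forall i j, Nm i j = Nm j i) ->
 (forall i k, - P i i * Q k i - Q i i * P k i = (Nm i k)%:~R) ->
 (forall i j k, i != j -> - P j i * Q k j - Q i j * P k i = 0) ->
 solution_matrix Nm P /\ Q = Qm P.
Proof.
move=> Nd Ns E1 E2.
have h2 : (2 : K) != 0 by rewrite pnatr_eq0.
have F0 i : P i i * Q i i = -1.
  have := E1 i i; rewrite Nd => h.
  by apply: (lin_from (k := - 2^-1) _ h); field.
have Pnz i : P i i != 0.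
  by apply/eqP => h; have := F0 i; rewrite h mul0r => /eqP; rewrite eq_sym oppr_eq0 oner_eq0.
have Qnz i : Q i i != 0.
  by apply/eqP => h; have := F0 i; rewrite h mulr0 => /eqP; rewrite eq_sym oppr_eq0 oner_eq0.
have Qii i : Q i i = - (P i i)^-1.
  apply: (lin_from (k := (P i i)^-1) _ (F0 i)); field; by rewrite Pnz.
have F12 i j : i != j -> (P j i = 0 /\ Q i j = 0) \/ (P j i = - P i i /\ Q i j = - Q j j).
  move=> ij.
  have e1 : P j i * (Q j j + Q i j) = 0.
    by apply: (lin_from (k := -1) _ (E2 i j j ij)); ring.
  have e2 : Q i j * (P j i + P i i) = 0.
    by apply: (lin_from (k := -1) _ (E2 i j i ij)); ring.
  have [h|h] := eqVneq (P j i) 0.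
    left; split => //; move: e2 => /eqP; rewrite h add0r mulf_eq0 (negbTE (Pnz i)) orbF.
    by move/eqP.
  right; move: e1 => /eqP; rewrite mulf_eq0 (negbTE h) /= addrC addr_eq0 => /eqP hq.
  split => //; move: e2 => /eqP; rewrite mulf_eq0 hq oppr_eq0 (negbTE (Qnz j)) /= addr_eq0.
  by move/eqP.
have Aoff i j : i != j -> (P i j = 0 /\ P i j / P j j = 0) \/ (P i j = - P j j /\ P i j / P j j = -1).
  move=> ij; have := F12 j i; rewrite eq_sym ij => /(_ isT) [[-> _]|[-> _]].
    by left; rewrite mul0r.
  by right; split => //; rewrite mulNr divff.
split.
  split; first exact: Pnz.
  split.
    move=> i j ij; rewrite !mxE.
    by have [[_ ->]|[_ ->]] := Aoff i j ij; [left|right].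
  split.
    move=> i j ij; rewrite !mxE Ns -(E1 i j) Qii.
    have ji : j != i by rewrite eq_sym.
    have [[g1 g1']|[g1 g1']] := F12 j i ji; have [[g2 g2']|[g2 g2']] := F12 i j ij;
      rewrite g1 g2 g1' ?Qii; field; by rewrite ?Pnz.
  move=> i j ij; rewrite !mxE => hij.
  have [[h _]|[hPij _]] := Aoff i j ij.
    by move: hij; rewrite h mul0r => /eqP; rewrite eq_sym oppr_eq0 oner_eq0.
  have ji : j != i by rewrite eq_sym.
  have [[h _]|[_ hQji]] := F12 j i ji; first by move: (Pnz j); rewrite -oppr_eq0 -hPij h eqxx.
  have key k : P j j * Q k i + Q i i * P k j = 0.
    by apply: (lin_from (k := 1) _ (E2 j i k ji)); rewrite hPij hQji; ring.
  split.
    move=> k kj; rewrite mxE.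
    have [->|ki] := eqVneq k i; first by rewrite divff ?Pnz // one_neqN1.
    have [[h _]|[h hq]] := F12 k i ki.
      by rewrite h mul0r eq_sym oppr_eq0 oner_eq0.
    exfalso.
    have hk : P k j = P j j.
      have := key k; rewrite hq => e.
      apply: (lin_from (k := (Q i i)^-1) _ e); field; by rewrite Qnz.
    have jk : j != k by rewrite eq_sym.
    have [[h' _]|[h' _]] := F12 j k jk.
      by move: (Pnz j); rewrite -hk h' eqxx.
    have : P j j = - P j j by rewrite -{1}hk h'.
    by move/xnegx => e; move: (Pnz j); rewrite e eqxx.
  move=> k ki; rewrite mxE.
  have [->|kj] := eqVneq k j; first by rewrite divff ?Pnz // one_neqN1.
  apply/negP => /eqP hk.
  have jk : j != k by rewrite eq_sym.
  have [[h _]|[h _]] := F12 j k jk.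
    by move: hk; rewrite h mul0r => /eqP; rewrite eq_sym oppr_eq0 oner_eq0.
  have hq : Q k i = Q i i.
    have := key k; rewrite h => e.
    apply: (lin_from (k := (P j j)^-1) _ e); field; by rewrite Pnz.
  have [[_ h']|[_ h']] := F12 k i ki.
    by move: (Qnz i); rewrite -hq h' eqxx.
  have : Q i i = - Q i i by rewrite -{1}hq h'.
  by move/xnegx => e; move: (Qnz i); rewrite e eqxx.
apply/matrixP => k i; rewrite !mxE.
have [->|ki] := eqVneq k i.
  rewrite Qii; field; by rewrite Pnz.
have [[h h']|[h h']] := F12 k i ki; rewrite h h'.
  by rewrite oppr0 mul0r.
rewrite Qii; field; by rewrite !Pnz.
Qed.

Lemma alg_sound (K : numFieldType) r (Nm : 'M[int]_r) (P : 'M[K]_r) :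
 (forall i, Nm i i = 2) -> (forall i j, Nm i j = Nm j i) -> solution_matrix Nm P ->
 (forall i k, - P i i * Qm P k i - Qm P i i * P k i = (Nm i k)%:~R) /\
 (forall i j k, i != j -> - P j i * Qm P k j - Qm P i j * P k i = 0).
Proof.
move=> Nd Ns [Pnz [Hoff [Hsum Huniq]]].
have Ho i j : i != j -> P i j / P j j = 0 \/ P i j / P j j = -1.
  by move=> ij; have := Hoff i j ij; rewrite !mxE.
have Hs i j : i != j -> P i j / P j j + P j i / P i i = (Nm j i)%:~R.
  by move=> ij; have := Hsum i j ij; rewrite !mxE.
have aii i : P i i / P i i = 1 by rewrite divff.
split.
  move=> i k; rewrite /Qm /qv !mxE.
  have -> : - P i i * (- P i k / (P i i * P k k)) - - P i i / (P i i * P i i) * P k i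
            = P i k / P k k + P k i / P i i by field; rewrite !Pnz.
  have [->|ki] := eqVneq k i; first by rewrite aii Nd.
  by rewrite Hs 1?eq_sym // Ns.
move=> i j k ij; rewrite /Qm /qv !mxE.
have -> : - P j i * (- P j k / (P j j * P k k)) - - P j i / (P j j * P i i) * P k i
   = P j i / P i i * (P i i / P j j) * (P j k / P k k + P k i / P i i) by field; rewrite !Pnz.
have ji : j != i by rewrite eq_sym.
have [->|hji] := Ho j i ji; first by rewrite !mul0r.
have [Hrow Hcol] : (forall k, k != i -> P j k / P k k != -1) /\ (forall k, k != j -> P k i / P i i != -1).
  have := Huniq j i ji; rewrite mxE => /(_ hji) [H1 H2].
  by split => l hl; [have := H1 l hl | have := H2 l hl]; rewrite mxE.
suff -> : P j k / P k k + P k i / P i i = 0 by rewrite mulr0.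
have [->|kj] := eqVneq k j; first by rewrite aii hji subrr.
have [->|ki] := eqVneq k i; first by rewrite aii hji addrC subrr.
have jk : j != k by rewrite eq_sym.
have [h1|h1] := Ho j k jk; last by move: (Hrow k ki); rewrite h1 eqxx.
have [h2|h2] := Ho k i ki; last by move: (Hcol k kj); rewrite h2 eqxx.
by rewrite h1 h2 addr0.
Qed.

Definition fourcases (K : fieldType) r (P : 'M[K]_r) i j (n : nat) :=
  ((n = 1%N /\ P i j = 0 /\ P j i = 0) \/ (n = 2%N /\ P i j = - P j j /\ P j i = 0) \/
   (n = 2%N /\ P i j = 0 /\ P j i = - P i i) \/ (n = 3%N /\ P i j = - P j j /\ P j i = - P i i)).

Lemma serre_cases (K : numFieldType) r (Nm : 'M[int]_r) (P : 'M[K]_r) i j :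
 (forall i j, Nm i j = Nm j i) -> solution_matrix Nm P -> i != j ->
 fourcases P i j `|1 - Nm i j|%N /\ fourcases (Qm P) i j `|1 - Nm i j|%N.
Proof.
move=> Ns [Pnz [Hoff [Hsum _]]] ij.
have ji : j != i by rewrite eq_sym.
have Ho i' j' : i' != j' -> P i' j' / P j' j' = 0 \/ P i' j' / P j' j' = -1.
  by move=> h; have := Hoff i' j' h; rewrite !mxE.
have Hs : P i j / P j j + P j i / P i i = (Nm i j)%:~R.
  by have := Hsum i j ij; rewrite !mxE Ns.
have Qij : Qm P i j = - P j i / (P j j * P i i) by rewrite /Qm /qv !mxE.
have Qji : Qm P j i = - P i j / (P i i * P j j) by rewrite /Qm /qv !mxE.
have Qjj : Qm P j j = - P j j / (P j j * P j j) by rewrite /Qm /qv !mxE.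
have Qii : Qm P i i = - P i i / (P i i * P i i) by rewrite /Qm /qv !mxE.
rewrite /fourcases Qij Qji Qjj Qii.
have [h1|h1] := Ho i j ij; have [h2|h2] := Ho j i ji;
  move: Hs; rewrite h1 h2 => Hs.
- have e1 := ratio0 (Pnz j) h1; have e2 := ratio0 (Pnz i) h2.
  have -> : Nm i j = 0 by apply: (@intr_inj K); rewrite -Hs addr0.
  rewrite e1 e2 !oppr0 !mul0r; split; left; done.
- have e1 := ratio0 (Pnz j) h1; have e2 := ratioN1 (Pnz i) h2.
  have -> : Nm i j = -1 by apply: (@intr_inj K); rewrite -Hs add0r intrN.
  rewrite e1 e2 !oppr0 !mul0r; split.
    by do 2 right; left.
  right; left; split => //; split => //; field; by rewrite !Pnz.
- have e1 := ratioN1 (Pnz j) h1; have e2 := ratio0 (Pnz i) h2.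
  have -> : Nm i j = -1 by apply: (@intr_inj K); rewrite -Hs addr0 intrN.
  rewrite e1 e2 !oppr0 !mul0r; split.
    by right; left.
  do 2 right; left; split => //; split => //; field; by rewrite !Pnz.
- have e1 := ratioN1 (Pnz j) h1; have e2 := ratioN1 (Pnz i) h2.
  have -> : Nm i j = -2 by apply: (@intr_inj K); rewrite -Hs intrN; ring.
  rewrite e1 e2; split.
    by do 3 right.
  do 3 right; split => //; split; field; by rewrite !Pnz.
Qed.


Lemma wt_ext (K : fieldType) (A : comUnitAlgType K) r (D : 'rV[K]_r -> A -> A) mu nu w :
  (forall c, mu c = nu c) -> wt D mu w -> wt D nu w.
Proof. by move=> e H c; rewrite H e. Qed.

Lemma setting (K : fieldType) t r (al : 'M[K]_(r + cartan_corank t, r)) (A : comUnitAlgType K) F v :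
 standing_hyps al F v ->
 exists D : 'rV[K]_r -> A -> A,
  [/\ Dgood D, (forall c, exists h, D c = F h), (forall h b, F h b = D (h *m al) b),
      (forall c, (forall b, D c b = 0) -> c = 0) &
      [/\ forall i, wt D (fun c => 1 * c 0 i) (v i), forall i, wt D (fun c => -1 * c 0 i) (v i)^-1,
          forall i, v i \is a GRing.unit & forall h1 h2 b, lieb (F h1) (F h2) b = 0]].
Proof.
case=> Hfree [Hal [Hlin [Hder [Hcom [Hker [Hunit Hv]]]]]].
have : row_full al by rewrite /row_full -mxrank_tr.
case/row_fullP => B HB.
have HD : Dgood (fun c => F (c *m B)).
  split; first by move=> a x y b; rewrite mulmxDl -scalemxAl Hlin.
  split; first by move=> c x y; exact: (Hder _).2.
  by move=> c1 c2 b; apply/eqP; rewrite -subr_eq0; apply/eqP; exact: Hcom.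
have FB h1 h2 b : F (h1 - h2) b = F h1 b - F h2 b.
  have e := Hlin (-1) h2 h1 b; rewrite !scaleN1r in e.
  by rewrite addrC e addrC.
have Wp i : wt (fun c => F (c *m B)) (fun c => 1 * c 0 i) (v i).
  by move=> c; rewrite Hv mul1r /alpha -mulmxA HB mulmx1.
exists (fun c => F (c *m B)); split => //.
- by move=> c; exists (c *m B).
- move=> h b; apply/eqP; rewrite -subr_eq0 -FB; apply/eqP; move: b; apply/Hker.
  by rewrite mulmxBl -(mulmxA _ B) HB mulmx1 subrr.
- move=> c H; have : (c *m B) *m al = 0 by apply/Hker.
  by rewrite -mulmxA HB mulmx1.
split => // i.
apply: (wt_ext (mu := fun c => - (1 * c 0 i))); first by move=> c; rewrite mulN1r mul1r.
exact: wt_inv.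
Qed.

Lemma cartan_diag t r (i : 'I_r) : cartanN t r i i = 2.
Proof. by rewrite mxE /cartan_entry eqxx. Qed.

Lemma cartan_sym t r (i j : 'I_r) : cartanN t r i j = cartanN t r j i.
Proof.
rewrite !mxE /cartan_entry eq_sym.
case: t => //=; case: (j == i) => //;
 case: (r == 2%N) => //; case: (i.+1 == j :> nat); case: (j.+1 == i :> nat) => //;
 case: (i == 0%N :> nat); case: (j == 0%N :> nat); case: (i == r.-1 :> nat); case: (j == r.-1 :> nat) => //.
Qed.


Definition succ_rel t r (i j : 'I_r) : bool :=
 (j == i.+1 :> nat) || match t with TypeA => false | TypeA1 => (i == r.-1 :> nat) && (j == 0%N :> nat) end.

Lemma succ_fun t r (i j k : 'I_r) : admissible_rank t r -> succ_rel t i j -> succ_rel t i k -> j = k.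
Proof.
move=> adm h1 h2; apply/val_inj => /=; move: (ltn_ord i) (ltn_ord j) (ltn_ord k) adm h1 h2.
by case: t; rewrite /succ_rel /admissible_rank /=; lia.
Qed.

Lemma succ_inj t r (i j k : 'I_r) : admissible_rank t r -> succ_rel t i j -> succ_rel t k j -> i = k.
Proof.
move=> adm h1 h2; apply/val_inj => /=; move: (ltn_ord i) (ltn_ord j) (ltn_ord k) adm h1 h2.
by case: t; rewrite /succ_rel /admissible_rank /=; lia.
Qed.

Lemma succ_sum t r (i j : 'I_r) : admissible_rank t r -> i != j ->
  ((if succ_rel t i j then -1 else 0) + (if succ_rel t j i then -1 else 0) : int) = cartan_entry t j i.
Proof.
move=> adm ij; have ij' : (i : nat) != j by []; have ji : j != i by rewrite eq_sym.
move: (ltn_ord i) (ltn_ord j) adm ij'.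
rewrite /cartan_entry (negbTE ji) /succ_rel /admissible_rank.
case: t => /=; repeat case: ifP; lia.
Qed.

Definition M0 (K : fieldType) t r : 'M[K]_r :=
  \matrix_(i, j) if i == j then 1 else if succ_rel t i j then -1 else 0.

Lemma zero_neqN1 (K : numFieldType) : (0 : K) != -1.
Proof. by rewrite eq_sym oppr_eq0 oner_eq0. Qed.

Lemma M0_sol (K : numFieldType) t r : admissible_rank t r -> solution_matrix (cartanN t r) (M0 K t r).
Proof.
move=> adm.
have Md i : M0 K t r i i = 1 by rewrite mxE eqxx.
have Mo i j : i != j -> M0 K t r i j = if succ_rel t i j then -1 else 0.
  by move=> ij; rewrite mxE (negbTE ij).
have A' i j : (\matrix_(i0, j0) (M0 K t r i0 j0 / M0 K t r j0 j0)) i j = M0 K t r i j.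
  by rewrite mxE Md divr1.
split; first by move=> i; rewrite Md oner_eq0.
split.
  by move=> i j ij; rewrite A' Mo //; case: ifP; [right|left].
split.
  move=> i j ij; have ji : j != i by rewrite eq_sym.
  rewrite !A' (Mo _ _ ij) (Mo _ _ ji) mxE -(succ_sum adm ij) intrD.
  by case: (succ_rel t i j); case: (succ_rel t j i); rewrite ?intrN.
move=> i j ij; rewrite A' Mo //; case: ifP => hs; last by move/eqP; rewrite (negbTE (zero_neqN1 K)).
move=> _; split => k hk; rewrite A'.
  have [->|ki] := eqVneq k i; first by rewrite Md one_neqN1.
  have ik : i != k by rewrite eq_sym.
  rewrite (Mo _ _ ik); case: ifP => h; last exact: zero_neqN1.
  by move: hk; rewrite (succ_fun adm hs h) eqxx.
have [->|kj] := eqVneq k j; first by rewrite Md one_neqN1.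
rewrite Mo //; case: ifP => h; last exact: zero_neqN1.
by move: hk; rewrite (succ_inj adm hs h) eqxx.
Qed.


Lemma soundL (K : numFieldType) t r (al : 'M[K]_(r + cartan_corank t, r)) (A : comUnitAlgType K)
  (F : 'rV[K]_(r + cartan_corank t) -> A -> A) (v : 'I_r -> A) (D : 'rV[K]_r -> A -> A) M :
 Dgood D -> (forall c, exists h, D c = F h) -> (forall h b, F h b = D (h *m al) b) ->
 (forall i, wt D (fun c => 1 * c 0 i) (v i)) -> (forall i, wt D (fun c => -1 * c 0 i) (v i)^-1) ->
 (forall i, v i \is a GRing.unit) -> (forall h1 h2 b, lieb (F h1) (F h2) b = 0) ->
 (forall i j, al (lshift (cartan_corank t) i) j = (cartanN t r i j)%:~R) ->
 solution_matrix (cartanN t r) M ->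
 problem1 al F v (fun i => D (colv M i)) (fun i => D (colv (Qm M) i)).
Proof.
move=> HD HIm HF Wp Wm Un Hcom Hal HM.
have [E1 E2] := alg_sound (@cartan_diag t r) (@cartan_sym t r) HM.
have Fl h : F h = lmulD 1 (D (h *m al)).
  by apply: functional_extensionality => b; rewrite /lmulD mul1r HF.
have Hb a j : (@Hbasis K t r a *m al) 0 j = al a j by rewrite /Hbasis -rowE mxE.
unfold problem1; cbv zeta beta.
split; first by move=> i; exact: HIm.
split; first by move=> i; exact: HIm.
split; first by move=> a b x; exact: Hcom.
split.
  move=> i x; rewrite (brk HD _ _ (Wp i) (Wm i)); cbv beta.
  rewrite /lmulD (mulrV (Un i)) [1 * D _ _]mul1r HF; congr (D _ x).
  apply/rowP => k; rewrite /Hbasis -rowE [X in _ = X]mxE Hal -E1 /colv /Qm /qv !mxE; ring.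
split.
  move=> i j x ij; rewrite (brk HD _ _ (Wp i) (Wm j)); cbv beta.
  have -> : (-1 * colv M i 0 j) *: colv (Qm M) j - (1 * colv (Qm M) j 0 i) *: colv M i = 0.
    by apply/rowP => k; rewrite [X in _ = X]mxE -(E2 i j k ij) /colv /Qm /qv !mxE; ring.
  by rewrite /lmulD (D0 HD) mulr0.
split.
  move=> a j x; rewrite Fl (brk HD _ _ (wt1 HD) (Wp j)); cbv beta.
  by rewrite scale0r subr0 /lmulD !mul1r (DZ HD) Hb scalerAr.
split.
  move=> a j x; rewrite Fl (brk HD _ _ (wt1 HD) (Wm j)); cbv beta.
  by rewrite scale0r subr0 /lmulD !mul1r (DZ HD) Hb mulN1r scalerAr.
split.
  move=> i j x ij; have [c1 _] := serre_cases (@cartan_sym t r) HM ij.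
  have e := serre HD (W := v) (eps := 1) Wp c1.
  exact: (equal_f e x).
move=> i j x ij; have [_ c2] := serre_cases (@cartan_sym t r) HM ij.
have e := serre HD (W := fun k => (v k)^-1) (eps := -1) Wm c2.
exact: (equal_f e x).
Qed.

Lemma completeL (K : numFieldType) t r (al : 'M[K]_(r + cartan_corank t, r)) (A : comUnitAlgType K)
  (F : 'rV[K]_(r + cartan_corank t) -> A -> A) (v : 'I_r -> A) (D : 'rV[K]_r -> A -> A) dp dm :
 Dgood D -> (forall h b, F h b = D (h *m al) b) -> (forall c, (forall b, D c b = 0) -> c = 0) ->
 (forall i, wt D (fun c => 1 * c 0 i) (v i)) -> (forall i, wt D (fun c => -1 * c 0 i) (v i)^-1) ->
 (forall i, v i \is a GRing.unit) ->
 (forall i j, al (lshift (cartan_corank t) i) j = (cartanN t r i j)%:~R) ->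
 problem1 al F v dp dm ->
 exists M, solution_matrix (cartanN t r) M /\ dp = (fun i => D (colv M i)) /\
           dm = (fun i => D (colv (Qm M) i)).
Proof.
move=> HD HF HD5 Wp Wm Un Hal.
unfold problem1; cbv zeta beta.
case=> Hp [Hm [_ [Hb1 [Hb2 _]]]].
have Dinj c1 c2 : (forall b, D c1 b = D c2 b) -> c1 = c2.
  move=> H; apply/eqP; rewrite -subr_eq0; apply/eqP; apply: HD5 => b.
  by rewrite (DB HD) H subrr.
have ex1 i : exists c, dp i = D c.
  have [h ->] := Hp i; exists (h *m al); apply: functional_extensionality => b; exact: HF.
have ex2 i : exists c, dm i = D c.
  have [h ->] := Hm i; exists (h *m al); apply: functional_extensionality => b; exact: HF.
have [cf Hcf] := fin_all_exists ex1.
have [ef Hef] := fin_all_exists ex2.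
pose M := \matrix_(k, i) cf i 0 k.
pose Q := \matrix_(k, i) ef i 0 k.
have cM i : colv M i = cf i by apply/rowP => k; rewrite !mxE.
have cQ i : colv Q i = ef i by apply/rowP => k; rewrite !mxE.
have E1 i k : - M i i * Q k i - Q i i * M k i = (cartanN t r i k)%:~R.
  have e : (-1 * cf i 0 i) *: ef i - (1 * ef i 0 i) *: cf i = @Hbasis K t r (lshift _ i) *m al.
    apply: Dinj => b; have := Hb1 i b.
    rewrite Hcf Hef (brk HD _ _ (Wp i) (Wm i)); cbv beta.
    by rewrite /lmulD (mulrV (Un i)) [1 * D _ _]mul1r HF.
  rewrite -Hal; move/rowP: e => /(_ k); rewrite /Hbasis -rowE !mxE => <-; ring.
have E2 i j k : i != j -> - M j i * Q k j - Q i j * M k i = 0.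
  move=> ij.
  have e : (-1 * cf i 0 j) *: ef j - (1 * ef j 0 i) *: cf i = 0.
    apply: Dinj => b; rewrite (D0 HD); have := Hb2 i j b ij.
    rewrite Hcf Hef (brk HD _ _ (Wp i) (Wm j)); cbv beta; rewrite /lmulD => h.
    have U : v i * (v j)^-1 \is a GRing.unit by rewrite unitrM Un unitrV Un.
    by rewrite -(mulKr U (D _ b)) h mulr0.
  move/rowP: e => /(_ k); rewrite !mxE => h; rewrite -h; ring.
have [HM HQ] := alg_complete (@cartan_diag t r) (@cartan_sym t r) E1 E2.
exists M; split => //; split; apply: functional_extensionality => i.
  by rewrite Hcf -cM.
by rewrite Hef -cQ HQ.
Qed.


Lemma sig_eq (T : Type) (P : T -> Prop) (a b : {x | P x}) : proj1_sig a = proj1_sig b -> a = b.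
Proof.
case: a => x hx; case: b => y hy /= e; subst y.
by rewrite (proof_irrelevance _ hx hy).
Qed.

Unset Implicit Arguments.

Theorem corollary3p15 (R : realType) (t : cartan_type) (r : nat)
  (al : 'M[R[i]]_(r + cartan_corank t, r)) (A : comUnitAlgType R[i])
  (F : 'rV[R[i]]_(r + cartan_corank t) -> A -> A) (v : 'I_r -> A) :
  admissible_rank t r ->
  standing_hyps al F v ->
  (exists dp dm : 'I_r -> A -> A, problem1 al F v dp dm) /\
  exists f : {d : ('I_r -> A -> A) * ('I_r -> A -> A) | problem1 al F v d.1 d.2} ->
             {M : 'M[R[i]]_r | solution_matrix (cartanN t r) M},
    bijective f.
Proof.
move=> adm HS.
have [D [HD HIm HF HD5 [Wp Wm Un Hcom]]] := setting HS.
have Hal : forall i j, al (lshift (cartan_corank t) i) j = (cartanN t r i j)%:~R.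
  by case: HS => _ [H _].
have snd M (HM : solution_matrix (cartanN t r) M) :=
  soundL HD HIm HF Wp Wm Un Hcom Hal HM.
have cpl dp dm (H : problem1 al F v dp dm) := completeL HD HF HD5 Wp Wm Un Hal H.
have Dinj c1 c2 : (forall b, D c1 b = D c2 b) -> c1 = c2.
  move=> H; apply/eqP; rewrite -subr_eq0; apply/eqP; apply: HD5 => b.
  by rewrite (DB HD) H subrr.
split.
  exists (fun i => D (colv (M0 R[i] t r) i)), (fun i => D (colv (Qm (M0 R[i] t r)) i)).
  by apply: snd; apply: M0_sol.
pose gp (M : 'M[R[i]]_r) := (fun i => D (colv M i), fun i => D (colv (Qm M) i)).
have compl (d : {d : ('I_r -> A -> A) * ('I_r -> A -> A) | problem1 al F v d.1 d.2}) :
    {M | solution_matrix (cartanN t r) M /\ (proj1_sig d).1 = (gp M).1 /\ (proj1_sig d).2 = (gp M).2}.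
  apply: constructive_indefinite_description.
  case: d => [[dp dm] H] /=; exact: cpl H.
pose f := fun d : {d : ('I_r -> A -> A) * ('I_r -> A -> A) | problem1 al F v d.1 d.2} =>
  exist (fun M => solution_matrix (cartanN t r) M) (proj1_sig (compl d)) (proj1 (proj2_sig (compl d))).
pose g := fun M : {M : 'M[R[i]]_r | solution_matrix (cartanN t r) M} =>
  exist (fun d : ('I_r -> A -> A) * ('I_r -> A -> A) => problem1 al F v d.1 d.2)
    (gp (proj1_sig M)) (snd _ (proj2_sig M)).
exists f, g.
- move=> d; apply: sig_eq; rewrite /g /f /=.
  case: (compl d) => M [HM [e1 e2]] /=.
  by rewrite [RHS]surjective_pairing e1 e2.
- move=> [M HM]; apply: sig_eq; rewrite /g /f /=.
  case: (compl _) => M' [HM' [e1 _]] /=.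
  apply/matrixP => k i.
  have e := Dinj _ _ (equal_f (equal_f e1 i)).
  by move/rowP: e => /(_ k); rewrite !mxE => ->.
Qed.
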